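(* For any $d_x,K\in\mathbb N$ and any $\gamma>0$, there exist a $\textsc{ReLU}$ network $f:\mathbb R^{d_x}\rightarrow\mathbb R$ of width $d_x+1$ and a set $\mathcal D_\gamma\subset[0,1]^{d_x}$ such that $f(x)=\mathtt{encode}_K(x)$ for all $x\in[0,1]^{d_x}\setminus\mathcal D_\gamma$, $\mu(\mathcal D_\gamma)<\gamma$, $f(\mathcal D_\gamma)\subset[0,1]$, and $f(\mathbb R^{d_x}\setminus[0,1]^{d_x})=\{1-2^{-d_xK}\}$, where $\mu$ denotes Lebesgue measure.
   Context: $\mathcal C_K:=\{0,2^{-K},2\cdot2^{-K},\dots,1-2^{-K}\}$, $q_K:[0,1]\to\mathcal C_K$, $q_K(t)=\max\{c\in\mathcal C_K:c\le t\}$. For $x\in[0,1]^{d_x}$, $\mathtt{encode}_K(x):=\sum_{i=1}^{d_x}q_K(x_i)\,2^{-(i-1)K}$. A $\textsc{ReLU}$ network is $t_L\circ\sigma_{L-1}\circ\cdots\circ\sigma_1\circ t_1$ with affine $t_\ell:\mathbb R^{d_{\ell-1}}\to\mathbb R^{d_\ell}$ and coordinatewise $\textsc{ReLU}$ $\sigma_\ell$; its width is $\max\{d_1,\dots,d_{L-1}\}$. *)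

(* Defs.v *)
From HB Require Import structures.
From mathcomp Require Import all_boot all_order all_algebra.
From mathcomp Require Import all_classical all_reals.
Set Implicit Arguments. Unset Strict Implicit. Unset Printing Implicit Defensive.
Import Order.TTheory GRing.Theory Num.Theory.
Local Open Scope ring_scope.
Local Open Scope classical_set_scope.

Section Defs.
Variable R : realType.

Definition relu_vec n (v : 'rV[R]_n) : 'rV[R]_n := map_mx (fun a => Num.max a 0) v.

(** A ReLU network  t_L o sigma_{L-1} o t_{L-1} o ... o sigma_1 o t_1
    from R^m to R^n, with affine maps t_l(x) = x *m W + b (row vectors).
    [NetLast W b] is the final affine map t_L; [NetCons W b N] is an affine
    layer t with output dimension k followed by ReLU and then the network N. *)
Inductive relu_net : nat -> nat -> Type :=
| NetLast : forall m n, 'M[R]_(m, n) -> 'rV[R]_n -> relu_net m n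
| NetCons : forall m k n, 'M[R]_(m, k) -> 'rV[R]_k -> relu_net k n -> relu_net m n.

Fixpoint net_eval m n (N : relu_net m n) : 'rV[R]_m -> 'rV[R]_n :=
  match N in relu_net m n return 'rV[R]_m -> 'rV[R]_n with
  | NetLast _ _ W b => fun x => x *m W + b
  | NetCons _ _ _ W b N' => fun x => net_eval N' (relu_vec (x *m W + b))
  end.

Fixpoint net_width m n (N : relu_net m n) : nat :=
  match N with
  | NetLast _ _ _ _ => 0%N
  | NetCons _ k _ _ _ N' => maxn k (net_width N')
  end.

Definition net_fun d (N : relu_net d 1) (x : 'rV[R]_d) : R := net_eval N x ord0 ord0.

(** q_K(t) = max { c in C_K : c <= t },  C_K = { i / 2^K : 0 <= i < 2^K }.
    (For t in [0,1] the set is nonempty, contains 0 and is nonnegative,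
    so the default value 0 of the big max is harmless.) *)
Definition qK (K : nat) (t : R) : R :=
  \big[Num.max/0]_(i < 2 ^ K | (i%:R / 2%:R ^+ K <= t)) (i%:R / 2%:R ^+ K).

(** encode_K(x) = sum_{i=1}^{d} q_K(x_i) 2^{-(i-1)K}  (0-indexed coordinates). *)
Definition encode (d K : nat) (x : 'rV[R]_d) : R :=
  \sum_(i < d) qK K (x ord0 i) * (2%:R ^- (i * K)).

Definition unit_cube (d : nat) : set 'rV[R]_d :=
  [set x | forall i, 0 <= x ord0 i <= 1].

Definition box_vol d (a b : 'rV[R]_d) : R :=
  \prod_(i < d) Num.max (b ord0 i - a ord0 i) 0.

Definition in_box d (a b : 'rV[R]_d) : set 'rV[R]_d :=
  [set x | forall i, a ord0 i <= x ord0 i <= b ord0 i].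

(** Lebesgue (outer) measure of A in R^d is < g: A is covered by countably
    many boxes whose total volume (the series sum) is < g, i.e. all partial
    sums are bounded by some c < g. *)
Definition lebesgue_lt d (A : set 'rV[R]_d) (g : R) : Prop :=
  exists (a b : nat -> 'rV[R]_d) (c : R),
    c < g /\
    A `<=` \bigcup_k in_box (a k) (b k) /\
    (forall n : nat, \sum_(k < n) box_vol (a k) (b k) <= c).

End Defs.

(* Main.v *)
Require Import Defs.
From HB Require Import structures.
From mathcomp Require Import all_boot all_order all_algebra.
From mathcomp Require Import all_classical all_reals.
From mathcomp Require Import lra zify.
Import Order.TTheory GRing.Theory Num.Theory.
Local Open Scope ring_scope.
Set Implicit Arguments. Unset Strict Implicit.

Section OneD.
Variable R : realType.

Definition relu (x : R) := Num.max x 0.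
Lemma relu_ge0 x : 0 <= relu x. Proof. by rewrite /relu le_max lexx orbT. Qed.
Lemma reluE x : 0 <= x -> relu x = x. Proof. by move=> h; rewrite /relu max_l. Qed.
Lemma relu0 x : x <= 0 -> relu x = 0. Proof. by move=> h; rewrite /relu max_r. Qed.
Lemma relu_cases x : (0 <= x /\ relu x = x) \/ (x <= 0 /\ relu x = 0).
Proof. case: (leP 0 x) => h; [left; split=>//; exact: reluE|right; split; [exact: ltW|exact/relu0/ltW]]. Qed.

Record pl := PL { pa : R; pb : R; pc : R; pa' : R; pb' : R; pc' : R }.
Definition pstep (p : pl) (us : R * R) : R * R :=
  (relu (pa p * us.1 + pb p * us.2 + pc p), relu (pa' p * us.1 + pb' p * us.2 + pc' p)).
Definition prun (ps : seq pl) (us : R * R) := foldl (fun us p => pstep p us) us ps.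

Lemma prun_cat p1 p2 us : prun (p1 ++ p2) us = prun p2 (prun p1 us).
Proof. by rewrite /prun foldl_cat. Qed.

Definition opAdd m e f := [:: PL 1 0 0 e 0 f; PL 1 m 0 0 0 0].
Definition opScale k := [:: PL k 0 0 0 0 0].
Definition opPhi a L := [:: PL 1 0 0 1 0 (-a); PL 1 (-1) 0 1 0 (-a - L); PL 1 1 0 0 0 0].

Lemma opAdd_spec (m e f u s : R) : 0 <= u -> 0 <= m ->
  (prun (opAdd m e f) (u, s)).1 = u + m * relu (e * u + f).
Proof.
move=> u0 m0; rewrite /prun /= !mul0r !mul1r !addr0 (@reluE u u0).
rewrite reluE //; apply: addr_ge0 => //; apply: mulr_ge0 => //; exact: relu_ge0.
Qed.

Lemma opScale_spec (k u s : R) : 0 <= u -> 0 <= k -> (prun (opScale k) (u, s)).1 = k * u.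
Proof. by move=> u0 k0; rewrite /prun /= !mul0r !addr0 reluE // mulr_ge0. Qed.

Lemma opPhi_spec (a L u s : R) : 0 <= u -> 0 <= a ->
  (prun (opPhi a L) (u, s)).1 = u - relu (u - a) + relu (u - a - L).
Proof.
move=> u0 a0; rewrite /prun /= !mul0r !mul1r !addr0 (@reluE u u0) !mulN1r.
have h1 : 0 <= u - relu (u + - a).
  by case: (relu_cases (u + - a)) => -[h ->]; lra.
rewrite (@reluE _ h1) reluE; last by apply: addr_ge0 => //; exact: relu_ge0.
by rewrite -!addrA.
Qed.

End OneD.
Arguments relu_cases {R}. Arguments relu_ge0 {R}. Arguments reluE {R}. Arguments relu0 {R}.


Section Stair.
Variable R : realType.
Variables h eps : R.
Hypothesis eps0 : 0 < eps.
Hypothesis epsh : eps < h.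
Local Ltac lra' := move: (eps0) (epsh) => ? ?; lra.

Definition kap := h / eps.
Definition LL := kap * (h - eps).
Definition phi (a u : R) := u - relu (u - a) + relu (u - a - LL).
Fixpoint Gm (m : nat) (u : R) : R :=
  match m with 0%N => u | m'.+1 => phi (m'%:R * h) (Gm m' u) end.

Lemma kap_eps : kap * eps = h.
Proof. rewrite /kap mulrAC -mulrA divff ?mulr1 //; exact: lt0r_neq0. Qed.
Lemma kap_ge0 : 0 <= kap.
Proof. rewrite /kap; apply: divr_ge0; lra'. Qed.
Lemma LL_ge0 : 0 <= LL.
Proof. rewrite /LL; apply: mulr_ge0; [exact: kap_ge0|lra']. Qed.

Lemma phi_id a u : u <= a -> phi a u = u.
Proof.
move=> ua; rewrite /phi !relu0; first lra'.
  have := LL_ge0; lra'.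
lra'.
Qed.

Lemma phi_ge0 a u : 0 <= a -> 0 <= u -> 0 <= phi a u.
Proof.
move=> a0 u0; rewrite /phi; have := relu_ge0 (u - a - LL).
by case: (relu_cases (u - a)) => -[h1 ->]; lra'.
Qed.

Lemma Gm_ge0 m u : 0 <= u -> 0 <= Gm m u.
Proof.
move=> u0; elim: m => //= m IH; apply: phi_ge0 => //.
apply: mulr_ge0; [exact: ler0n|lra'].
Qed.

Lemma kmul a b : 0 <= a -> a <= b -> kap * a <= kap * b.
Proof. move=> ? ?; apply: ler_wpM2l => //; exact: kap_ge0. Qed.

Lemma Gm_tail m T : m%:R * h <= T ->
  Gm m (kap * T) = m%:R * h + kap * (T - m%:R * h).
Proof.
elim: m => [|m IH] /=; first by rewrite !mul0r subr0 add0r.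
rewrite -natr1 => hT.
have hm : m%:R * h <= T by have := ler0n R m; lra'.
rewrite IH //.
have k1 := kap_eps.
have k2 : kap * h <= kap * (T - m%:R * h) by apply: kmul; lra'.
rewrite /phi /LL; rewrite !reluE; first lra'.
- have : kap * (h - eps) <= kap * (T - m%:R * h) by apply: kmul; lra'.
  lra'.
- have := kmul (a := 0) (b := T - m%:R * h) (lexx 0); rewrite mulr0.
  move=> H; have := H ltac:(lra'); lra'.
Qed.

Lemma Gm_low m T : 0 <= T -> T <= m%:R * h -> Gm m (kap * T) <= m%:R * h.
Proof.
move=> T0; elim: m => [|m IH] /=.
  rewrite mul0r => hT; have -> : T = 0 by lra'.
  by rewrite mulr0.
rewrite -natr1 => hT.
case: (leP T (m%:R * h)) => hm.
  rewrite phi_id; [have := IH hm; lra'| exact: IH].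
rewrite Gm_tail; last lra'.
have k1 := kap_eps.
have k2 : kap * (T - m%:R * h) <= kap * h by apply: kmul; lra'.
have k3 : 0 <= kap * (T - m%:R * h) by have := kmul (a := 0) (b := T - m%:R * h) (lexx 0); rewrite mulr0; apply; lra'.
rewrite /phi /LL; rewrite [relu (_ - _ * _)]reluE; last lra'.
case: (relu_cases (m%:R * h + kap * (T - m%:R * h) - m%:R * h - kap * (h - eps))) => -[h1 ->]; lra'.
Qed.

Lemma Gm_flat j k T : j%:R * h <= T -> T <= j%:R * h + h - eps ->
  Gm (j + k).+1 (kap * T) = j%:R * h.
Proof.
move=> hT1 hT2; elim: k => [|k IH].
  rewrite addn0 /= Gm_tail //.
  have k1 := kap_eps.
  have k2 : kap * (T - j%:R * h) <= kap * (h - eps) by apply: kmul; lra'.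
  have k3 : 0 <= kap * (T - j%:R * h) by have := kmul (a := 0) (b := T - j%:R * h) (lexx 0); rewrite mulr0; apply; lra'.
  rewrite /phi /LL reluE; last lra'.
  rewrite relu0; lra'.
rewrite addnS.
change (phi ((j + k).+1%:R * h) (Gm (j + k).+1 (kap * T)) = j%:R * h).
rewrite IH phi_id //.
apply: ler_wpM2r; first lra'.
rewrite ler_nat; lia.
Qed.

End Stair.


Lemma stair_spec (R : realType) (h eps : R) m u s : 0 < eps -> eps < h -> 0 <= h -> 0 <= u ->
  (prun (flatten [seq opPhi (j%:R * h) (LL h eps) | j <- iota 0 m]) (u, s)).1 = Gm h eps m u.
Proof.
move=> e0 eh h0 u0; elim: m => [|m IH] //.
rewrite -addn1 iotaD map_cat flatten_cat prun_cat.
have -> : flatten [seq opPhi (j%:R * h) (LL h eps) | j <- iota (0 + m) 1] = opPhi (m%:R*h) (LL h eps) by rewrite add0n /=.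
case E: (prun _ (u, s)) => [u' s']; rewrite E /= in IH.
rewrite opPhi_spec; last by apply: mulr_ge0 => //; exact: ler0n.
  by rewrite IH addn1.

by rewrite IH; apply: (Gm_ge0 e0 eh).
Qed.

Section Prog.
Variable R : realType.
Variables (K : nat) (eps Mb : R).

Definition hK : R := (2%:R ^+ K)^-1.
Definition nK := (2 ^ K)%N.
Definition Pp (t : R) := t + eps^-1 * relu (-1 * t + eps).
Definition Psi (u : R) := u + Mb * relu (1 * u + - (1 - hK)).
Definition prog : seq (pl R) :=
  opAdd eps^-1 (-1) eps ++ opScale (kap hK eps) ++
  flatten [seq opPhi (j%:R * hK) (LL hK eps) | j <- iota 0 nK] ++ opAdd Mb 1 (- (1 - hK)).
Definition gfun (t : R) := Psi (Gm hK eps nK (kap hK eps * Pp t)).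

Hypothesis eps0 : 0 < eps.
Hypothesis epsh : eps < hK.
Hypothesis Mb0 : 0 <= Mb.

Lemma hK_gt0 : 0 < hK.
Proof. by rewrite /hK invr_gt0 exprn_gt0 // ltr0n. Qed.

Lemma nKhK : nK%:R * hK = 1.
Proof. by rewrite /nK /hK natrX divff // expf_neq0 // pnatr_eq0. Qed.

Lemma Pp_ge0 t : 0 <= t -> 0 <= Pp t.
Proof.
move=> t0; rewrite /Pp; apply: addr_ge0 => //; apply: mulr_ge0; last exact: relu_ge0.
by rewrite invr_ge0 ltW.
Qed.

Lemma prog_spec t s : 0 <= t -> (prun prog (t, s)).1 = gfun t.
Proof.
move=> t0; have e0 := eps0; have eh := epsh; have h0 := hK_gt0.
rewrite /prog !prun_cat.
case E1: (prun (opAdd _ _ _) (t, s)) => [u1 s1].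
have H1 : u1 = Pp t.
  have := @opAdd_spec R eps^-1 (-1) eps t s t0 (_ : 0 <= eps^-1); rewrite E1 /= => -> //; by rewrite invr_ge0 ltW.
case E2: (prun (opScale _) (u1, s1)) => [u2 s2].
have k0 : 0 <= kap hK eps by exact: (kap_ge0 e0 eh).
have H2 : u2 = kap hK eps * Pp t.
  have := @opScale_spec R (kap hK eps) u1 s1 (_ : 0 <= u1) k0; rewrite E2 H1 /= => -> //; exact: Pp_ge0.
case E3: (prun (flatten _) (u2, s2)) => [u3 s3].
have H3 : u3 = Gm hK eps nK (kap hK eps * Pp t).
  have := @stair_spec R hK eps nK u2 s2 e0 eh (ltW h0) (_ : 0 <= u2); rewrite E3 H2 /= => -> //.
  by apply: mulr_ge0 => //; exact: Pp_ge0.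
have u30 : 0 <= u3 by rewrite H3; apply: (Gm_ge0 e0 eh); apply: mulr_ge0 => //; exact: Pp_ge0.
rewrite (@opAdd_spec R Mb 1 (- (1 - hK)) u3 s3 u30 Mb0) H3.
by rewrite /gfun /Psi.
Qed.

Lemma gfun_ge0 t : 0 <= t -> 0 <= gfun t.
Proof.
move=> t0; have e0 := eps0; have eh := epsh.
rewrite /gfun /Psi; apply: addr_ge0; last by apply: mulr_ge0 => //; exact: relu_ge0.
apply: (Gm_ge0 e0 eh); apply: mulr_ge0; [exact: (kap_ge0 e0 eh)|exact: Pp_ge0].
Qed.

Lemma gfun_good t (j : nat) : (j < nK)%N -> eps <= t -> j%:R * hK <= t -> t <= j%:R * hK + hK - eps ->
  gfun t = j%:R * hK.
Proof.
move=> jn et t1 t2; have e0 := eps0; have eh := epsh.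
have Pt : Pp t = t by rewrite /Pp relu0 ?mulr0 ?addr0 //; lra.
rewrite /gfun Pt.
have -> : nK = (j + (nK - j.+1)).+1 by lia.
rewrite (Gm_flat e0 eh) //.
rewrite /Psi relu0 ?mulr0 ?addr0 //.
have : (j.+1)%:R * hK <= nK%:R * hK by apply: ler_wpM2r; [exact: ltW hK_gt0| rewrite ler_nat].
rewrite nKhK -natr1; lra.
Qed.

Lemma gfun_bad t : 0 <= t -> (t = 0 \/ 1 <= t) -> Mb * hK <= gfun t.
Proof.
move=> t0 ht; have e0 := eps0; have eh := epsh; have h0 := hK_gt0.
have PT : 1 <= Pp t.
  case: ht => [->|t1].
    rewrite /Pp mulr0 !add0r reluE ?mulVf ?lexx //; [exact: lt0r_neq0|exact: ltW].
  rewrite /Pp; have := relu_ge0 (-1 * t + eps).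
  have : 0 <= eps^-1 by rewrite invr_ge0 ltW.
  move=> a b; have := mulr_ge0 a b; lra.
rewrite /gfun (Gm_tail e0 eh); last by rewrite nKhK.
rewrite nKhK.
have k0 : 0 <= kap hK eps by exact: (kap_ge0 e0 eh).
have := mulr_ge0 k0 (_ : 0 <= Pp t - 1); move=> /(_ ltac:(lra)) kp.
set u := 1 + _.
have u1 : 1 <= u by rewrite /u; lra.
rewrite /Psi.
have : 1 * u + - (1 - hK) <= relu (1 * u + - (1 - hK)) by rewrite /relu le_max lexx.
move=> hr.
have : Mb * hK <= Mb * relu (1 * u + - (1 - hK)).
  apply: ler_wpM2l => //; lra.
lra.
Qed.

End Prog.


Section Vec.
Variable R : realType.
Variable d : nat.

Definition wi (i : 'I_d) : 'I_d.+1 := widen_ord (leqnSn d) i.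
Definition sp : 'I_d.+1 := ord_max.

Lemma wi_sp i : (wi i == sp) = false.
Proof. by apply/negbTE; rewrite -val_eqE /= neq_ltn ltn_ord. Qed.
Lemma wi_eq i j : (wi i == wi j) = (i == j).
Proof. by rewrite -!val_eqE. Qed.

Lemma sum_delta (n : nat) (F : 'I_n -> R) (l : 'I_n) :
  \sum_k F k * (k == l)%:R = F l.
Proof.
rewrite (bigD1 l) //= eqxx mulr1 big1 ?addr0 // => k /negbTE ->; by rewrite mulr0.
Qed.

Lemma sum2 (n : nat) (F : 'I_n -> R) (p q : 'I_n) (a b : R) : p != q ->
  \sum_k F k * (if k == p then a else if k == q then b else 0) = F p * a + F q * b.
Proof.
move=> pq; rewrite (bigD1 p) //= eqxx (bigD1 q) /=; last by rewrite eq_sym.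
rewrite eq_sym (negbTE pq) eqxx big1 ?addr0 // => k /andP[kp kq].
by rewrite (negbTE kp) (negbTE kq) mulr0.
Qed.

Definition layer := ('M[R]_(d.+1, d.+1) * 'rV[R]_(d.+1))%type.
Definition lay (L : layer) (v : 'rV[R]_(d.+1)) := relu_vec (v *m L.1 + L.2).

Definition liftL (i : 'I_d) (p : pl R) : layer :=
  (\matrix_(k, l) (if l == wi i then (if k == wi i then pa p else if k == sp then pb p else 0)
                   else if l == sp then (if k == wi i then pa' p else if k == sp then pb' p else 0)
                   else (k == l)%:R),
   \row_l (if l == wi i then pc p else if l == sp then pc' p else 0)).

Lemma lay_lift i p v l : lay (liftL i p) v 0 l =
  if l == wi i then relu (pa p * v 0 (wi i) + pb p * v 0 sp + pc p)
  else if l == sp then relu (pa' p * v 0 (wi i) + pb' p * v 0 sp + pc' p)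
  else relu (v 0 l).
Proof.
rewrite /lay /relu_vec /= !mxE.
have ne : wi i != sp by rewrite wi_sp.
case: ifP => H1.
  rewrite (eq_bigr (fun k => v 0 k * (if k == wi i then pa p else if k == sp then pb p else 0))); last by move=> k _; rewrite mxE H1.
  by rewrite sum2 // [v 0 (wi i) * _]mulrC [v 0 sp * _]mulrC.
case: ifP => H2.
  rewrite (eq_bigr (fun k => v 0 k * (if k == wi i then pa' p else if k == sp then pb' p else 0))); last by move=> k _; rewrite mxE H1 H2.
  by rewrite sum2 // [v 0 (wi i) * _]mulrC [v 0 sp * _]mulrC.
rewrite (eq_bigr (fun k => v 0 k * (k == l)%:R)); last by move=> k _; rewrite mxE H1 H2.
by rewrite sum_delta addr0.
Qed.

Definition runL (ls : seq layer) v := foldl (fun v L => lay L v) v ls.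

Lemma runL_cat l1 l2 v : runL (l1 ++ l2) v = runL l2 (runL l1 v).
Proof. by rewrite /runL foldl_cat. Qed.

Lemma run_lift i ps (v : 'rV[R]_d.+1) : (forall l, l != wi i -> l != sp -> 0 <= v 0 l) ->
  let w := runL [seq liftL i p | p <- ps] v in
  [/\ w 0 (wi i) = (prun ps (v 0 (wi i), v 0 sp)).1,
      w 0 sp = (prun ps (v 0 (wi i), v 0 sp)).2 &
      forall l, l != wi i -> l != sp -> w 0 l = v 0 l].
Proof.
elim: ps v => [|p ps IH] v hv /=; first by split.
set v1 := lay (liftL i p) v.
have hv1 : forall l, l != wi i -> l != sp -> 0 <= v1 0 l.
  by move=> l h1 h2; rewrite /v1 lay_lift (negbTE h1) (negbTE h2) relu_ge0.
have [A B C] := IH v1 hv1.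
have E1 : v1 0 (wi i) = (pstep p (v 0 (wi i), v 0 sp)).1 by rewrite /v1 lay_lift eqxx.
have E2 : v1 0 sp = (pstep p (v 0 (wi i), v 0 sp)).2 by rewrite /v1 lay_lift eq_sym wi_sp eqxx.
split.
- by rewrite A E1 E2 -surjective_pairing.
- by rewrite B E1 E2 -surjective_pairing.
- move=> l h1 h2; rewrite C // /v1 lay_lift (negbTE h1) (negbTE h2) reluE //; exact: hv l h1 h2.
Qed.

Fixpoint build (ls : seq layer) (N : relu_net R d.+1 1) : relu_net R d.+1 1 :=
  match ls with [::] => N | L :: ls' => NetCons L.1 L.2 (build ls' N) end.

Lemma build_eval ls N v : net_eval (build ls N) v = net_eval N (runL ls v).
Proof. by elim: ls v => //= L ls IH v; rewrite IH. Qed.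

Lemma build_width ls N : (net_width N <= d.+1)%N -> (net_width (build ls N) <= d.+1)%N.
Proof. by move=> h; elim: ls => //= L ls IH; rewrite geq_max leqnn IH. Qed.

End Vec.


Lemma prun_ge0 (R : realType) ps (us : R * R) : 0 <= us.1 -> 0 <= us.2 ->
  0 <= (prun ps us).1 /\ 0 <= (prun ps us).2.
Proof.
elim: ps us => [|p ps IH] us h1 h2 //=.
by apply: IH; rewrite /= relu_ge0.
Qed.

Section Net.
Variable R : realType.
Variable d : nat.
Variable pr : seq (pl R).
Variable G : R -> R.
Hypothesis prS : forall t s, 0 <= t -> (prun pr (t, s)).1 = G t.

Definition allL (r : seq 'I_d) : seq (layer R d) :=
  flatten [seq [seq liftL i p | p <- pr] | i <- r].

Lemma all_spec r (v : 'rV[R]_d.+1) : uniq r -> (forall l, 0 <= v 0 l) ->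
  let w := runL (allL r) v in
  (forall l, 0 <= w 0 l) /\
  (forall i, w 0 (wi i) = if i \in r then G (v 0 (wi i)) else v 0 (wi i)).
Proof.
elim: r v => [|i r IH] v /= ur hv; first by split.
move: ur => /andP[ir ur].
rewrite runL_cat.
set v1 := runL _ v.
have hv' : forall l, l != wi i -> l != sp d -> 0 <= v 0 l by move=> l *; exact: hv.
have [A B C] := @run_lift R d i pr v hv'.
have [P1 P2] := @prun_ge0 R pr (v 0 (wi i), v 0 (sp d)) (hv _) (hv _).
have hv1 : forall l, 0 <= v1 0 l.
  move=> l; case: (eqVneq l (wi i)) => [->|h1]; first by rewrite /v1 A.
  case: (eqVneq l (sp d)) => [->|h2]; first by rewrite /v1 B.
  by rewrite /v1 C //.
have [D E] := IH v1 ur hv1.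
split => // j; rewrite E in_cons.
case: (eqVneq j i) => [->|ji] /=.
  by rewrite (negbTE ir) /v1 A prS.
have h1 : wi j != wi i by rewrite wi_eq.
have h2 : wi j != sp d by rewrite wi_sp.
by rewrite /v1 C.
Qed.

Variable K : nat.
Variable c0 : R.

Definition W0 : 'M[R]_(d, d.+1) := \matrix_(k, l) (wi k == l)%:R.
Definition wt (l : 'I_d.+1) : R := if (l < d)%N then 2%:R ^- (l * K) else 0.
Definition Wc : 'M[R]_(d.+1, 1) := \matrix_(l, j) (- wt l).
Definition Nend : relu_net R d.+1 1 :=
  NetCons Wc (\row_j c0) (NetLast (\matrix_(i, j) (-1)) (\row_j c0)).
Definition theNet : relu_net R d 1 :=
  NetCons W0 0 (build (allL (enum 'I_d)) Nend).

Lemma theNet_width : net_width theNet = d.+1.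
Proof.
rewrite /= ; apply/maxn_idPl; apply: build_width => /=.
by rewrite maxn0.
Qed.

Lemma Nend_eval (v : 'rV[R]_d.+1) :
  net_eval Nend v 0 0 = c0 - relu (c0 - \sum_(i < d) v 0 (wi i) * 2%:R ^- (i * K)).
Proof.
rewrite /Nend /= !mxE big_ord1 /relu_vec !mxE.
rewrite big_ord_recr /= /Wc !mxE /wt ltnn oppr0 mulr0 addr0.
under eq_bigr => i _ do rewrite mxE /= ltn_ord mulrN.
rewrite sumrN mulrN1 /relu addrC; congr (c0 - Num.max _ 0); by rewrite addrC.
Qed.

Lemma theNet_eval (x : 'rV[R]_d) :
  net_fun theNet x = c0 - relu (c0 - \sum_(i < d) G (relu (x 0 i)) * 2%:R ^- (i * K)).
Proof.
rewrite /net_fun /theNet /= build_eval Nend_eval.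
set v0 := relu_vec _.
have hv0 : forall l, 0 <= v0 0 l by move=> l; rewrite /v0 /relu_vec mxE relu_ge0.
have [_ E] := all_spec (enum_uniq 'I_d) hv0.
congr (c0 - relu (c0 - _)); apply: eq_bigr => i _; rewrite E mem_enum.
congr (G _ * _).
rewrite /v0 /relu_vec !mxE addr0.
rewrite (eq_bigr (fun k => x 0 k * (k == i)%:R)) ?sum_delta //.
by move=> k _; rewrite mxE wi_eq.
Qed.

End Net.


Lemma bigmax_le (R : realType) (I : Type) (r : seq I) (P : pred I) (F : I -> R) (c : R) :
  0 <= c -> (forall i, P i -> F i <= c) -> \big[Num.max/0]_(i <- r | P i) F i <= c.
Proof.
move=> c0 hF; apply: (big_ind (fun y => y <= c)) => // x y hx hy.
by rewrite ge_max hx hy.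
Qed.

Lemma le_bigmax (R : realType) (I : eqType) (r : seq I) (P : pred I) (F : I -> R) j :
  j \in r -> P j -> F j <= \big[Num.max/0]_(i <- r | P i) F i.
Proof.
elim: r => // a r IH; rewrite in_cons big_cons => /orP[/eqP->|jr] Pj.
  by rewrite Pj le_max lexx.
case: ifP => _; last exact: IH.
by rewrite le_max (IH jr Pj) orbT.
Qed.

Lemma qK_val (R : realType) (K j : nat) (t : R) : (j < 2 ^ K)%N ->
  j%:R * hK R K <= t -> t < j.+1%:R * hK R K -> qK K t = j%:R * hK R K.
Proof.
move=> jn t1 t2; have h0 := hK_gt0 R K.
apply/eqP; rewrite eq_le; apply/andP; split.
  apply: bigmax_le; first by apply: mulr_ge0; [exact: ler0n|exact: ltW].
  move=> i hi; apply: ler_wpM2r; first exact: ltW.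
  rewrite ler_nat -ltnS -(ltr_nat R).
  have : (i%:R : R) * hK R K < j.+1%:R * hK R K by exact: le_lt_trans hi t2.
  by rewrite ltr_pM2r.
have := @le_bigmax R 'I_(2 ^ K) (index_enum 'I_(2 ^ K)) (fun i : 'I_(2 ^ K) => (i%:R / 2%:R ^+ K <= t))
   (fun i : 'I_(2 ^ K) => i%:R / 2%:R ^+ K) (Ordinal jn) (mem_index_enum _) t1.
by [].
Qed.

Lemma geom (R : realType) (K d : nat) :
  \sum_(i < d) (1 - hK R K) * 2%:R ^- (i * K) = 1 - 2%:R ^- (d * K).
Proof.
elim: d => [|d IH]; first by rewrite big_ord0 mul0n expr0 invr1 subrr.
rewrite big_ord_recr /= IH mulSn exprD invfM /hK.
set a := (2%:R ^+ K)^-1; set b := (2%:R ^+ (d * K))^-1 : R.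
rewrite /=; lra.
Qed.

Lemma locate (R : realType) (h t : R) m : 0 <= t -> t < m%:R * h ->
  exists j, (j < m)%N /\ j%:R * h <= t < j.+1%:R * h.
Proof.
move=> t0; elim: m => [|m IH]; first by rewrite mul0r; lra.
move=> tm; case: (ltP t (m%:R * h)) => hm.
  by have [j [jm hj]] := IH hm; exists j; split => //; lia.
by exists m; split => //; rewrite hm tm.
Qed.


Local Open Scope classical_set_scope.

Definition goodc (R : realType) (n : nat) (h eps t : R) :=
  eps <= t /\ exists j, (j < n)%N /\ j%:R * h <= t /\ t <= j%:R * h + h - eps.

Lemma find_bad (R : realType) (n : nat) (h eps t : R) : 0 < eps -> eps < h -> n%:R * h = 1 ->
  0 <= t <= 1 -> ~ goodc n h eps t ->
  exists j, (j <= n)%N /\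
    (if j == 0%N then 0 else j%:R * h - eps) <= t <= (if j == 0%N then eps else j%:R * h).
Proof.
move=> e0 eh nh /andP[t0 t1] ng.
have nn : n != 0%N by apply/eqP => n0; move: nh; rewrite n0 mul0r; lra.
case: (ltP t eps) => te.
  by exists 0%N; split => //=; rewrite t0 ltW.
case: (ltP t 1) => t1'.
  have tn : t < n%:R * h by rewrite nh.
  have [j0 [j0n /andP[a b]]] := @locate R h t n t0 tn.
  exists j0.+1; split => //=.
  have : ~ (t <= j0%:R * h + h - eps) by move=> hh; apply: ng; split => //; exists j0.
  move: b; rewrite -natr1 mulrDl mul1r => b nb.
  case: (leP t (j0%:R * h + h - eps)) => // c.
  by apply/andP; split; lra.
exists n; split => //; rewrite (negbTE nn) nh; apply/andP; split; lra.
Qed.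

Lemma cover (R : realType) (d n : nat) (h eps g : R) : (0 < d)%N -> 0 < eps -> eps < h ->
  n%:R * h = 1 -> (d * n.+1)%:R * eps < g ->
  lebesgue_lt [set x : 'rV[R]_d | unit_cube x /\ ~ (forall i, goodc n h eps (x ord0 i))] g.
Proof.
move=> dpos e0 eh nh hg.
pose N1 := n.+1.
have N1pos : (0 < N1)%N by [].
pose lo j : R := if j == 0%N then 0 else j%:R * h - eps.
pose hi j : R := if j == 0%N then eps else j%:R * h.
have lohi j : hi j - lo j = eps by rewrite /hi /lo; case: ifP => _; lra.
pose a k : 'rV[R]_d := if (k < d * N1)%N then \row_l (if (l : nat) == (k %/ N1)%N then lo (k %% N1)%N else 0) else const_mx 1.
pose b k : 'rV[R]_d := if (k < d * N1)%N then \row_l (if (l : nat) == (k %/ N1)%N then hi (k %% N1)%N else 1) else const_mx 0.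
have vol k : box_vol (a k) (b k) = if (k < d * N1)%N then eps else 0.
  rewrite /box_vol /a /b; case: ifP => kd.
    have kl : (k %/ N1 < d)%N by rewrite ltn_divLR.
    rewrite (bigD1 (Ordinal kl)) //= big1 ?mulr1.
      by rewrite !mxE eqxx lohi max_l //; exact: ltW.
    move=> l /negP hl; rewrite !mxE.
    case: eqP => [hl'|_]; first by exfalso; apply: hl; apply/eqP/val_inj.
    by rewrite subr0 max_l.
  under eq_bigr => l _ do rewrite !mxE sub0r max_r ?lerN10 //.
  rewrite prodr_const card_ord expr0n; move: dpos; by case: (d).
exists a, b, ((d * N1)%:R * eps); split => //; split.
- move=> x [cx ng].
  have [i hi0] : exists i, ~ goodc n h eps (x ord0 i) by apply/existsNP.
  have [j [jn /andP[j1 j2]]] := find_bad e0 eh nh (cx i) hi0.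
  exists (i * N1 + j)%N => //.
  have kd : (i * N1 + j < d * N1)%N.
    have : (i.+1 * N1 <= d * N1)%N by rewrite leq_mul2r ltn_ord orbT.
    rewrite mulSn /N1; lia.
  have kdiv : ((i * N1 + j) %/ N1 = i)%N by rewrite divnMDl // divn_small ?addn0 //; rewrite ltnS.
  have kmod : ((i * N1 + j) %% N1 = j)%N by rewrite modnMDl modn_small // ltnS.
  move=> l; rewrite /a /b kd !mxE kdiv kmod.
  case: eqP => [li|_]; last exact: cx.
  have -> : l = i by apply: val_inj.
  by rewrite /lo /hi j1 j2.
- move=> m; rewrite (eq_bigr (fun k : 'I_m => if (k < d * N1)%N then eps else 0)); last by move=> k _; rewrite vol.
  have H : forall m, \sum_(k < m) (if (k < d * N1)%N then eps else 0) = (minn m (d * N1))%:R * eps.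
    elim=> [|m' IH]; first by rewrite big_ord0 min0n mul0r.
    rewrite big_ord_recr /= IH.
    case: ifP => hm.
      have -> : minn m'.+1 (d * N1) = (minn m' (d * N1)).+1 by lia.
      by rewrite -natr1 mulrDl mul1r.
    have -> : minn m'.+1 (d * N1) = minn m' (d * N1) by lia.
    by rewrite addr0.
  rewrite H; apply: ler_wpM2r; first exact: ltW.
  by rewrite ler_nat geq_minr.
Qed.


Unset Implicit Arguments.

Theorem lemma7 (R : realType) (dx K : nat) (gamma : R) :
  (0 < dx)%N -> (0 < K)%N -> 0 < gamma ->
  exists (N : relu_net R dx 1) (D : set 'rV[R]_dx),
    [/\ net_width N = dx.+1,
        D `<=` (@unit_cube R dx),
        (forall x, (@unit_cube R dx) x -> ~ D x -> net_fun N x = encode K x),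
        lebesgue_lt D gamma
      & (net_fun N @` D `<=` [set t | 0 <= t <= 1] /\
         net_fun N @` (~` (@unit_cube R dx)) = [set 1 - 2%:R ^- (dx * K)])].
Proof.
move=> dpos Kpos g0.
have h0 : 0 < hK R K := hK_gt0 R K.
pose h := hK R K.
pose M := (dx * (nK K).+1)%N.
pose q := gamma / (M.+1)%:R.
have q0 : 0 < q by apply: divr_gt0 => //; rewrite ltr0n.
have qM : q * (M.+1)%:R = gamma by rewrite /q divfK // pnatr_eq0.
pose eps := Num.min (h / 2) q.
have e0 : 0 < eps by rewrite lt_min q0 andbT divr_gt0.
have eh2 : eps <= h / 2 by rewrite ge_min lexx.
have eq : eps <= q by rewrite ge_min lexx orbT.
have eh : eps < hK R K by rewrite -/h; lra.
pose Mb : R := 2%:R ^+ (dx * K) * 2%:R ^+ K.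
have Mb0 : 0 <= Mb by apply: mulr_ge0; apply: exprn_ge0; exact: ler0n.
have MbH : Mb * hK R K = 2%:R ^+ (dx * K).
  by rewrite /Mb /hK -mulrA divff ?mulr1 // expf_neq0 // pnatr_eq0.
pose c0 : R := 1 - 2%:R ^- (dx * K).
have p1 : (1 : R) <= 2%:R ^+ (dx * K) by apply: exprn_ege1; rewrite ler1n.
have c01 : 0 <= c0 <= 1.
  have i0 : 0 < (2%:R ^+ (dx * K) : R)^-1 by rewrite invr_gt0; lra.
  have : (2%:R ^+ (dx * K) : R)^-1 <= 1 by rewrite invf_le1 //; lra.
  by rewrite /c0; move=> ?; apply/andP; split; lra.
pose G := gfun K eps Mb.
have prS := @prog_spec R K eps Mb e0 eh Mb0.
exists (theNet dx (prog K eps Mb) K c0).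
exists [set x : 'rV[R]_dx | unit_cube x /\ ~ (forall i, goodc (nK K) (hK R K) eps (x ord0 i))].
have fE := theNet_eval prS K c0.
have S0 : forall x : 'rV[R]_dx, 0 <= \sum_(i < dx) gfun K eps Mb (relu (x 0 i)) * 2%:R ^- (i * K).
  move=> x; apply: sumr_ge0 => i _; apply: mulr_ge0.
    exact: (gfun_ge0 e0 eh Mb0 (relu_ge0 _)).
  by rewrite invr_ge0 exprn_ge0 // ler0n.
have outside : forall x : 'rV[R]_dx, ~ unit_cube x ->
    net_fun (theNet dx (prog K eps Mb) K c0) x = c0.
  move=> x nc.
  have [i hi] : exists i, ~ (0 <= x ord0 i <= 1) by apply/existsNP.
  have bad : relu (x 0 i) = 0 \/ 1 <= relu (x 0 i).
    case: (relu_cases (x 0 i)) => -[xa ->]; last by left.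
    right; case: (leP (x 0 i) 1) => x1; last exact: ltW.
    by exfalso; apply: hi; rewrite xa x1.
  have gb := gfun_bad e0 eh Mb0 (relu_ge0 (x 0 i)) bad.
  rewrite MbH in gb.
  have w0 : 0 < (2%:R ^+ (i * K) : R) by rewrite exprn_gt0 // ltr0n.
  have wle : (2%:R ^+ (i * K) : R) <= 2%:R ^+ (dx * K).
    by apply: ler_weXn2l; [rewrite ler1n | rewrite leq_mul2r ltnW ?orbT].
  have t1 : 1 <= gfun K eps Mb (relu (x 0 i)) * 2%:R ^- (i * K).
    rewrite ler_pdivlMr // mul1r; lra.
  have Sge : gfun K eps Mb (relu (x 0 i)) * 2%:R ^- (i * K) <=
     \sum_(i < dx) gfun K eps Mb (relu (x 0 i)) * 2%:R ^- (i * K).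
    rewrite (bigD1 i) //= lerDl; apply: sumr_ge0 => k _; apply: mulr_ge0.
      exact: (gfun_ge0 e0 eh Mb0 (relu_ge0 _)).
    by rewrite invr_ge0 exprn_ge0 // ler0n.
  rewrite fE relu0; first by rewrite subr0.
  move: c01 => /andP[? ?]; lra.
split.
- exact: theNet_width.
- by move=> x [].
- move=> x cx nD.
  have hg : forall i, goodc (nK K) (hK R K) eps (x ord0 i).
    case: (pselect (forall i, goodc (nK K) (hK R K) eps (x ord0 i))) => // hn.
    by exfalso; apply: nD.
  have SE : \sum_(i < dx) gfun K eps Mb (relu (x 0 i)) * 2%:R ^- (i * K) = encode K x.
    rewrite /encode; apply: eq_bigr => i _.
    have [et [j [jn [t1 t2]]]] := hg i.
    have x0 : 0 <= x ord0 i by have := cx i; case/andP.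
    rewrite (reluE _ x0) (gfun_good e0 eh Mb0 jn et t1 t2) (@qK_val R K j) //.
    by rewrite -natr1 mulrDl mul1r; lra.
  have Sle : \sum_(i < dx) gfun K eps Mb (relu (x 0 i)) * 2%:R ^- (i * K) <= c0.
    rewrite /c0 -geom; apply: ler_sum => i _.
    apply: ler_wpM2r; first by rewrite invr_ge0 exprn_ge0 // ler0n.
    have [et [j [jn [t1 t2]]]] := hg i.
    have x0 : 0 <= x ord0 i by have := cx i; case/andP.
    rewrite (reluE _ x0) (gfun_good e0 eh Mb0 jn et t1 t2).
    have : j.+1%:R * hK R K <= (nK K)%:R * hK R K by apply: ler_wpM2r; [lra| rewrite ler_nat].
    rewrite nKhK -natr1 mulrDl mul1r; lra.
  rewrite fE reluE; last lra.
  by rewrite -SE; lra.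
- apply: (cover dpos e0 eh (nKhK R K)).
  have : M%:R * eps <= M%:R * q by apply: ler_wpM2l => //; exact: ler0n.
  rewrite -/M; move: qM; rewrite -natr1 mulrDr mulr1; lra.
- split.
    move=> y [x _ <-]; rewrite fE.
    have := S0 x; move: c01 => /andP[? ?].
    by case: (relu_cases (c0 - \sum_(i < dx) gfun K eps Mb (relu (x 0 i)) * 2%:R ^- (i * K))) => -[? ->] ?; apply/andP; split; lra.
  apply/seteqP; split.
    by move=> y [x nc <-]; rewrite /= outside.
  move=> y /= ->.
  have nc : ~ unit_cube (const_mx 2%:R : 'rV[R]_dx).
    move=> /(_ (Ordinal dpos)); rewrite mxE; lra.
  by exists (const_mx 2%:R) => //; rewrite outside.
Qed.
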